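(* Let $T$ be an interval exchange transformation over the ordered alphabet $\mathcal{A}=\{a_1<\dots<a_k\}$ whose permutation is the symmetric permutation $\pi(a_i)=a_{k-i+1}$. Then every return word in the language of $T$ is perfectly clustering; i.e., for every $w\in\mathcal{L}(T)$ and every $u\in\mathcal{R}(w)$, $\mathrm{bwt}_{\mathcal{A}}(u)=a_k^{|u|_{a_k}}a_{k-1}^{|u|_{a_{k-1}}}\cdots a_1^{|u|_{a_1}}$.
   Context: A $k$-IET $T$ on $I=[\ell,r)$ over $\mathcal{A}$ is given by a partition of $I$ into left-closed right-open intervals $(I_a)_{a\in\mathcal{A}}$ of positive length ordered left to right by the order of $\mathcal{A}$ and a permutation $\pi$ of $\mathcal{A}$; $T(x)=x+\tau_a$ on $I_a$ with $\tau_a=\sum_{b:\,\pi^{-1}(b)<\pi^{-1}(a)}|I_b|-\sum_{b<a}|I_b|$. No minimality or regularity is assumed. Trajectories $\Omega_T(x)=w_0w_1\cdots$ with $w_i=a$ iff $T^i(x)\in I_a$; $\mathcal{L}(T)$ is the set of finite factors of all trajectories. Return words: $\mathcal{R}(w)=\{u\in\mathcal{A}^*: uw\in(\mathcal{L}(T)\cap w\mathcal{A}^* )\setminus\mathcal{A}^+w\mathcal{A}^+\}$. For a word $v$ of length $n$, $\mathrm{bwt}_{\mathcal{A}}(v)$ is the word of last letters of the $n$ cyclic rotations of $v$ sorted lexicographically w.r.t. the order of $\mathcal{A}$. A word is perfectly clustering if it is $\pi$-clustering for the symmetric permutation, i.e. its Burrows–Wheeler transform has the displayed form. *)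

(* Defs.v *)
From HB Require Import structures.
From mathcomp Require Import all_boot all_order all_algebra fingroup perm.
From mathcomp Require Import reals.
Set Implicit Arguments. Unset Strict Implicit. Unset Printing Implicit Defensive.
Import Order.TTheory GRing.Theory Num.Theory.
Local Open Scope ring_scope.

(* Alphabet A = 'I_k = {a_1 < ... < a_k} (a_i is the ordinal i-1), ordered by
   the natural order of ordinals.  An IET is given by a left endpoint l, the
   lengths len a > 0 of the intervals I_a, and a permutation pi of the
   alphabet; I = [l, l + sum_a len a). *)

Section IET.
Variables (R : realType) (k : nat) (pi : {perm 'I_k}) (l : R) (len : 'I_k -> R).

Definition iet_start (a : 'I_k) : R := l + \sum_(b < k | (b < a)%N) len b.

Definition iet_in (a : 'I_k) (x : R) : bool :=
  (iet_start a <= x) && (x < iet_start a + len a).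

Definition iet_dom (x : R) : bool := (l <= x) && (x < l + \sum_(b < k) len b).

Definition iet_tau (a : 'I_k) : R :=
  \sum_(b < k | ((pi^-1)%g b < (pi^-1)%g a)%N) len b - \sum_(b < k | (b < a)%N) len b.

(* T x = x + tau_a for x \in I_a (the I_a are disjoint); identity outside I *)
Definition iet_map (x : R) : R :=
  x + \sum_(a < k) (if iet_in a x then iet_tau a else 0).

(* w is a factor of the trajectory Omega_T(x) = w_0 w_1 ... (w_i = a iff
   T^i(x) \in I_a):  w = w_n ... w_{n+|w|-1} for some n *)
Definition iet_factor_of (x : R) (w : seq 'I_k) : Prop :=
  exists n : nat, forall (i : nat) (a : 'I_k), onth w i = Some a ->
    iet_in a (iter (n + i) iet_map x).

Definition iet_lang (w : seq 'I_k) : Prop :=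
  exists x : R, iet_dom x /\ iet_factor_of x w.

(* R(w) = { u | uw \in (L(T) \cap wA^* ) \ A^+ w A^+ } *)
Definition iet_return (w u : seq 'I_k) : Prop :=
  iet_lang (u ++ w) /\ prefix w (u ++ w) /\
  ~ (exists p s : seq 'I_k, (0 < size p)%N /\ (0 < size s)%N /\ u ++ w = p ++ w ++ s).
End IET.

Definition sym_perm (k : nat) : {perm 'I_k} := perm (@rev_ord_inj k).

Fixpoint lexle (k : nat) (s t : seq 'I_k) : bool :=
  match s, t with
  | [::], _ => true
  | _ :: _, [::] => false
  | a :: s', b :: t' => (a < b)%N || ((a == b) && lexle s' t')
  end.

Definition bwt (k : nat) (v : seq 'I_k) : seq 'I_k :=
  flatten [seq drop (size s).-1 s | s <- sort (@lexle k) [seq rot i v | i <- iota 0 (size v)]].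

Definition perfectly_clustering (k : nat) (u : seq 'I_k) : Prop :=
  bwt u = flatten [seq nseq (count_mem a u) a | a <- rev (enum 'I_k)].

(* Main.v *)
Require Import Defs.
From HB Require Import structures.
From mathcomp Require Import all_boot all_order all_algebra fingroup perm.
From mathcomp Require Import reals.
From mathcomp Require Import zify lra.
Import Order.TTheory GRing.Theory Num.Theory.

Section Lex.
Variable k : nat.
Implicit Types s t : seq 'I_k.

Lemma lexle_refl s : lexle s s.
Proof. by elim: s => //= a s ->; rewrite eqxx orbT. Qed.

Lemma ordeq (a b : 'I_k) : (a == b) = (nat_of_ord a == nat_of_ord b).
Proof. by []. Qed.

Lemma lexle_total s t : lexle s t || lexle t s.
Proof.
elim: s t => [|a s IH] [|b t] //=.
rewrite !ordeq; case: (ltngtP a b) => Hab //=.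
Qed.

Lemma lexle_anti s t : lexle s t -> lexle t s -> s = t.
Proof.
elim: s t => [|a s IH] [|b t] //=.
rewrite !ordeq; case: (ltngtP a b) => Hab //=.
move=> H1 H2.
by rewrite (IH t) //; congr (_ :: _); apply: val_inj.
Qed.

Lemma lexle_nth (a0 : 'I_k) s t : size s = size t ->
  (forall d, d < size s -> (forall e, e < d -> nth a0 s e = nth a0 t e) ->
     (nth a0 s d <= nth a0 t d)%N) -> lexle s t.
Proof.
elim: s t => [|a s IH] [|b t] //= [Hs] H.
have H0 := H 0 isT (fun e (he : e < 0) => False_ind _ (notF he)).
rewrite /= in H0.
rewrite ordeq; case: (ltngtP a b) => Hab //=.
- by rewrite leqNgt Hab in H0.
- apply: IH => // d hd he.
  by apply: (H d.+1 hd) => -[|e] /= he'; [apply: val_inj | apply: he].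
Qed.
End Lex.

Lemma nth_rot' (T : Type) (x0 : T) (s : seq T) i t : i <= size s -> t < size s ->
  nth x0 (rot i s) t = nth x0 s ((i + t) %% size s).
Proof.
move=> hi ht; rewrite /rot nth_cat size_drop.
case: ltnP => h.
  by rewrite nth_drop modn_small //; lia.
rewrite nth_take; last by lia.
congr nth.
have -> : i + t = (t - (size s - i)) + size s by lia.
by rewrite modnDr modn_small //; lia.
Qed.

Lemma flatten_last (T : Type) (a0 : T) (S : seq (seq T)) :
  all (fun s => 0 < size s) S ->
  flatten [seq drop (size s).-1 s | s <- S] = [seq last a0 s | s <- S].
Proof.
elim: S => //= s S IH /andP [hs hS]; rewrite IH //.
case/lastP: s hs => //= s c _.
by rewrite size_rcons /= -cats1 drop_size_cat // last_cat.
Qed.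

Section Clust.
Variable k : nat.

Lemma rhs_perm (u : seq 'I_k) :
  perm_eq (flatten [seq nseq (count_mem a u) a | a <- rev (enum 'I_k)]) u.
Proof.
apply/allP => x _ /=; apply/eqP.
rewrite count_flatten -map_comp.
rewrite (_ : sumn _ = \sum_(a <- rev (enum 'I_k)) (count_mem x (nseq (count_mem a u) a))); last first.
  by rewrite /sumn foldrE big_map.
rewrite big_rev /= big_enum /=.
rewrite (bigD1 x) //= big1 ?addn0.
  by rewrite count_nseq /= eqxx mul1n.
by move=> a hax; rewrite count_nseq /= (negbTE hax) mul0n.
Qed.

Lemma rhs_sorted (u : seq 'I_k) :
  sorted (fun a b : 'I_k => (b <= a)%N)
    (flatten [seq nseq (count_mem a u) a | a <- rev (enum 'I_k)]).
Proof.
have tr : transitive (fun a b : 'I_k => (b <= a)%N).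
  by move=> y x z h1 h2; apply: leq_trans h2 h1.
rewrite sorted_pairwise //.
have : pairwise (fun a b : 'I_k => (b < a)%N) (rev (enum 'I_k)).
  rewrite -sorted_pairwise; last by move=> y x z h1 h2; apply: ltn_trans h2 h1.
  rewrite rev_sorted.
  have := iota_ltn_sorted 0 k; rewrite -val_enum_ord.
  by rewrite sorted_map.
elim: (rev (enum 'I_k)) => //= a s IH /andP [ha hs].
rewrite pairwise_cat IH // andbT; apply/andP; split.
  apply/allrelP => x y /nseqP [-> _] /flattenP [z /mapP [b hb ->] /nseqP [-> _]].
  by have /allP /(_ b hb) := ha; apply: ltnW.
elim: (count_mem a u) => //= n ->; rewrite andbT.
by apply/allP => x /nseqP [-> _].
Qed.
End Clust.

Section Clust.
Variable k : nat.

Lemma last_rot (a0 : 'I_k) (u : seq 'I_k) i : i < size u ->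
  last a0 (rot i u) = nth a0 u ((i + (size u).-1) %% size u).
Proof.
move=> hi; rewrite -nth_last size_rot nth_rot' //; lia.
Qed.

Lemma bwt_clust (u : seq 'I_k) :
  (forall (a0 : 'I_k) i j, 0 < i <= size u -> 0 < j <= size u ->
     (nth a0 u j.-1 < nth a0 u i.-1)%N -> lexle (rot i u) (rot j u)) ->
  perfectly_clustering u.
Proof.
case: u => [|a0 u'] H.
  by rewrite /perfectly_clustering /bwt /=; elim: (rev (enum 'I_k)).
set u := a0 :: u' in H *.
have nP : 0 < size u by [].
rewrite /perfectly_clustering /bwt.
set rots := [seq rot i u | i <- iota 0 (size u)].
have Hrots : forall x, x \in rots -> exists2 i, 0 < i <= size u &
    x = rot i u /\ last a0 x = nth a0 u i.-1.
  move=> x /mapP [i]; rewrite mem_iota add0n => /andP [_ hi] ->.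
  case: (posnP i) => [i0|ip].
    exists (size u); first by rewrite nP leqnn.
    split; first by rewrite rot_size i0 rot0.
    by rewrite i0 last_rot // add0n modn_small //; lia.
  exists i; first by rewrite ip ltnW.
  split=> //; rewrite last_rot //; congr nth.
  have -> : i + (size u).-1 = i.-1 + size u by lia.
  by rewrite modnDr modn_small //; lia.
rewrite (@flatten_last _ a0); last first.
  rewrite all_sort; apply/allP => x /Hrots [i _ [-> _]].
  by rewrite size_rot.
apply: (@sorted_eq _ (fun a b : 'I_k => (b <= a)%N)).
- by move=> y x z h1 h2; apply: leq_trans h2 h1.
- by move=> x y /andP [h1 h2]; apply: val_inj; apply/eqP; rewrite eqn_leq h1 h2.
- apply: (@homo_sorted_in _ _ (mem rots) _ (@lexle k)).
  + move=> x y /Hrots [i hi [ex lx]] /Hrots [j hj [ey ly]] hxy.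
    rewrite leqNgt; apply/negP => hlt.
    have hyx : lexle y x by rewrite ex ey; apply: (H a0) => //; rewrite -lx -ly.
    have exy := @lexle_anti k x y hxy hyx; move: hlt; rewrite exy ltnn //.
  + by apply/allP => x; rewrite mem_sort.
  + by apply: sort_sorted => x y; apply: lexle_total.
- exact: rhs_sorted.
- apply: (@perm_trans _ [seq last a0 s | s <- rots]).
    by apply: perm_map; rewrite perm_sort.
  apply: (@perm_trans _ (rotr 1 u)); last first.
    apply: (@perm_trans _ u); first by rewrite perm_rotr.
    by rewrite perm_sym rhs_perm.
  have -> : [seq last a0 s | s <- rots] = rotr 1 u.
    apply: (@eq_from_nth _ a0).
      by rewrite size_map size_map size_iota size_rotr.
    move=> t; rewrite size_map size_map size_iota => ht.
    rewrite (nth_map [::]) ?size_map ?size_iota //.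
    rewrite (nth_map 0) ?size_iota // nth_iota // add0n last_rot //.
    rewrite /rotr nth_rot' //; last by lia.
    by congr nth; congr modn; lia.
  exact: perm_refl.
Qed.
End Clust.

Section Comb.
Variables (k : nat) (a0 : 'I_k).

Lemma Pv (u w : seq 'I_k) : 0 < size u -> prefix w (u ++ w) ->
  forall t, t < size (u ++ w) -> nth a0 (u ++ w) t = nth a0 u (t %% size u).
Proof.
move=> nP /prefixP [s' Hs] t; elim/ltn_ind: t => t IH ht.
case: (ltnP t (size u)) => h.
  by rewrite nth_cat h modn_small.
rewrite nth_cat ltnNge h /=.
have hw : t - size u < size w by move: ht; rewrite size_cat; lia.
have -> : nth a0 w (t - size u) = nth a0 (u ++ w) (t - size u).
  by rewrite Hs nth_cat hw.
rewrite IH; [|lia|move: ht; rewrite size_cat; lia].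
congr nth; have {2}-> : t = (t - size u) + size u by lia.
by rewrite modnDr.
Qed.

Lemma core (u w : seq 'I_k) i j : 0 < size u -> prefix w (u ++ w) ->
  0 < j -> j < i -> i <= size u ->
  (forall e, e < size (u ++ w) - i ->
     nth a0 u ((i + e) %% size u) = nth a0 u ((j + e) %% size u)) ->
  exists p s : seq 'I_k, (0 < size p)%N /\ (0 < size s)%N /\ u ++ w = p ++ w ++ s.
Proof.
move=> nP pre j0 ji isz H.
set v := u ++ w.
have Nv : size v = size u + size w by rewrite size_cat.
set q := j + size u - i.
have occ : forall s, s < size w -> nth a0 v (q + s) = nth a0 w s.
  move=> s hs.
  rewrite Pv //; last by rewrite Nv; lia.
  have -> : q + s = j + (size u - i + s) by lia.
  rewrite -H; last by rewrite Nv; lia.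
  have -> : i + (size u - i + s) = s + size u by lia.
  rewrite modnDr -(Pv u w) //; last by rewrite Nv; lia.
  case/prefixP: pre => s' Hs.
  by rewrite /v Hs nth_cat hs.
exists (take q v), (drop (size w) (drop q v)).
split; first by rewrite size_takel; lia.
split; first by rewrite !size_drop; lia.
rewrite -{1}(cat_take_drop q v); congr (_ ++ _).
rewrite -{1}(cat_take_drop (size w) (drop q v)); congr (_ ++ _).
apply: (@eq_from_nth _ a0).
  by rewrite size_takel // size_drop; lia.
move=> s; rewrite size_takel ?size_drop; last by lia.
by move=> hs; rewrite nth_take // nth_drop occ.
Qed.
End Comb.
Local Open Scope ring_scope.

Section Geo.
Variables (R : realType) (k : nat) (l : R) (len : 'I_k -> R).
Hypothesis len_pos : forall a : 'I_k, 0 < len a.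

Lemma sum_incl (P Q : pred 'I_k) e : (forall c, P c -> Q c) -> Q e -> ~~ P e ->
  \sum_(c < k | P c) len c + len e <= \sum_(c < k | Q c) len c.
Proof.
move=> PQ Qe nPe.
rewrite [X in _ <= X](bigID P) /=.
rewrite (eq_bigl P); last by move=> c; apply/andP/idP => [[]|h] //; split => //; apply: PQ.
rewrite lerD2l (bigD1 e) /=; last by rewrite Qe.
rewrite lerDl; apply: sumr_ge0 => c _; exact: ltW.
Qed.

Notation start := (iet_start l len).
Notation pi := (sym_perm k).
Notation T := (iet_map pi l len).
Notation inI := (iet_in l len).

Lemma start_le (a b : 'I_k) : (a < b)%N -> start a + len a <= start b.
Proof.
move=> ab; rewrite /iet_start -addrA lerD2l.
apply: (@sum_incl (fun c : 'I_k => (c < a)%N) (fun c : 'I_k => (c < b)%N) a) => //=.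
- by move=> c ca; apply: ltn_trans ca ab.
- by rewrite ltnn.
Qed.

Lemma inv_sym (c : 'I_k) : ((pi^-1)%g c) = rev_ord c.
Proof.
apply: (@perm_inj _ pi); rewrite permKV /sym_perm permE.
by rewrite rev_ordK.
Qed.

Lemma tau_sym (a : 'I_k) :
  start a + iet_tau pi len a = l + \sum_(c < k | (a < c)%N) len c.
Proof.
rewrite /iet_start /iet_tau.
rewrite (eq_bigl (fun c : 'I_k => (a < c)%N) (P1 := fun b => ((pi^-1)%g b < (pi^-1)%g a)%N)).
  by rewrite addrAC -addrA addrNK.
by move=> c /=; rewrite !inv_sym /=; have := ltn_ord c; have := ltn_ord a; lia.
Qed.

Lemma in_unique (a b : 'I_k) x : inI a x -> inI b x -> a = b.
Proof.
rewrite /iet_in => /andP [a1 a2] /andP [b1 b2].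
case: (ssrnat.ltngtP a b) => h.
- have hh := @start_le _ _ h; clear h; exfalso; lra.
- have hh := @start_le _ _ h; clear h; exfalso; lra.
- exact: val_inj.
Qed.

Lemma map_in (a : 'I_k) x : inI a x -> T x = x + iet_tau pi len a.
Proof.
move=> ha; rewrite /iet_map (bigD1 a) //= ha big1 ?addr0 //.
move=> b hb; case: ifP => // hb'.
by rewrite (@in_unique _ _ _ hb' ha) eqxx in hb.
Qed.

Lemma order_le (a b : 'I_k) x y : inI a x -> inI b y -> x < y -> (a <= b)%N.
Proof.
rewrite /iet_in => /andP [a1 a2] /andP [b1 b2] xy.
rewrite leqNgt; apply/negP => h; have hh := @start_le _ _ h; clear h; exfalso; lra.
Qed.

Lemma sym_swap (a b : 'I_k) x y : (a < b)%N -> inI b x -> inI a y -> T x < T y.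
Proof.
move=> ab hx hy; rewrite (@map_in _ _ hx) (@map_in _ _ hy).
have e1 := tau_sym a; have e2 := tau_sym b.
have := @sum_incl (fun c : 'I_k => (b < c)%N) (fun c : 'I_k => (a < c)%N) b.
move=> /(_ (fun c bc => ltn_trans ab bc) ab (negbT (ltnn b))) hs.
move: hx hy; rewrite /iet_in => /andP [x1 x2] /andP [y1 y2].
lra.
Qed.

Lemma same_trans (a : 'I_k) x y : inI a x -> inI a y -> x < y -> T x < T y.
Proof. move=> hx hy xy; rewrite (@map_in _ _ hx) (@map_in _ _ hy); lra. Qed.

End Geo.

Section Dyn.
Variables (R : realType) (k : nat) (l : R) (len : 'I_k -> R).
Hypothesis len_pos : forall a : 'I_k, 0 < len a.
Variables (x0 : R) (n0 : nat) (v : seq 'I_k) (a0 : 'I_k).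
Hypothesis Htraj : forall (i : nat) (a : 'I_k), onth v i = Some a ->
    iet_in l len a (iter (n0 + i) (iet_map (sym_perm k) l len) x0).

Definition pt t := iter (n0 + t) (iet_map (sym_perm k) l len) x0.

Lemma traj_in t : (t < size v)%N -> iet_in l len (nth a0 v t) (pt t).
Proof. by move=> ht; apply: Htraj; rewrite onthE (nth_map a0). Qed.

Lemma ptS t : pt t.+1 = iet_map (sym_perm k) l len (pt t).
Proof. by rewrite /pt addnS iterS. Qed.

Lemma mono i j d : pt i < pt j ->
  (forall e, (e < d)%N -> [/\ (i + e < size v)%N, (j + e < size v)%N &
                           nth a0 v (i + e) = nth a0 v (j + e)]) ->
  pt (i + d) < pt (j + d).
Proof.
move=> h0; elim: d => [|d IH] H; first by rewrite !addn0.
have [hi hj he] := H d (ltnSn d).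
have := IH (fun e he' => H e (ltnW (leq_trans he' (ltnSn d)))).
rewrite !addnS !ptS => hlt.
apply: (@same_trans R k l len len_pos (nth a0 v (i + d))) => //.
  exact: traj_in.
by rewrite he; apply: traj_in.
Qed.
End Dyn.

Theorem corollary6p7 (R : realType) (k : nat) (l : R) (len : 'I_k -> R)
    (len_pos : forall a : 'I_k, 0 < len a) :
  forall w u : seq 'I_k,
    iet_lang (sym_perm k) l len w ->
    iet_return (sym_perm k) l len w u ->
    perfectly_clustering u.
Proof.
move=> w u _ [[x0 [_ [n0 Htraj]]] [pre nocc]].
apply: bwt_clust => a0 i j /andP [i0 iu] /andP [j0 ju] hlt.
have nP : (0 < size u)%N by lia.
have Hv := @Pv _ a0 u w nP pre.
apply: (@lexle_nth _ a0); first by rewrite !size_rot.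
move=> d; rewrite size_rot => hd hagree.
have hag : forall e, (e < d)%N ->
    nth a0 u ((i + e) %% size u) = nth a0 u ((j + e) %% size u).
  move=> e he; rewrite -!nth_rot' //; [exact: hagree|lia|lia].
rewrite !nth_rot' //.
case: (boolP ((d < size (u ++ w) - i) && (d < size (u ++ w) - j))%N) => [/andP [hdi hdj] | hno].
- have base : @pt R k l len x0 n0 i < @pt R k l len x0 n0 j.
    have -> : i = i.-1.+1 by lia.
    have -> : j = j.-1.+1 by lia.
    rewrite !ptS.
    apply: (@sym_swap R k l len len_pos (nth a0 (u ++ w) j.-1) (nth a0 (u ++ w) i.-1)).
    + by rewrite !nth_cat ifT ?ifT //; lia.
    + apply: (@traj_in R k l len x0 n0 (u ++ w) a0 Htraj); rewrite size_cat; lia.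
    + apply: (@traj_in R k l len x0 n0 (u ++ w) a0 Htraj); rewrite size_cat; lia.
  have hm := @mono R k l len len_pos x0 n0 (u ++ w) a0 Htraj i j d base.
  have hm' : @pt R k l len x0 n0 (i + d) < @pt R k l len x0 n0 (j + d).
    apply: hm => e he; split; [lia|lia|].
    rewrite !Hv; [exact: hag|lia|lia].
  have hi : (i + d < size (u ++ w))%N by lia.
  have hj : (j + d < size (u ++ w))%N by lia.
  have := @order_le R k l len len_pos _ _ _ _
    (@traj_in R k l len x0 n0 (u ++ w) a0 Htraj _ hi)
    (@traj_in R k l len x0 n0 (u ++ w) a0 Htraj _ hj) hm'.
  by rewrite !Hv.
- exfalso; apply: nocc.
  case: (ssrnat.ltngtP i j) => hij.
  + apply: (@core _ a0 u w j i nP pre i0 hij ju) => e he.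
    by rewrite hag //; lia.
  + apply: (@core _ a0 u w i j nP pre j0 hij iu) => e he.
    by rewrite hag //; lia.
  + by rewrite hij ltnn in hlt.
Qed.
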